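(* Let $R=\mathbb{Z}$ or $R=\mathbb{Z}[i]$, let $\lambda$ be a positive integer, and let $A\in R^{n\times n}$ satisfy $A^*A=\lambda I$. Let $\mathrm{SNF}(A)=\mathrm{diag}(\alpha_1,\dots,\alpha_n)$ be its Smith normal form. Then $\overline{\alpha_j}\,\alpha_{n+1-j}=\lambda$ for all $1\leq j\leq n$.
   Context: The Smith normal form of $A\in R^{n\times n}$ is $\mathrm{diag}(\alpha_1,\dots,\alpha_n)$ where $A\in\mathrm{GL}_n(R)\,\mathrm{diag}(\alpha_1,\dots,\alpha_n)\,\mathrm{GL}_n(R)$, $\alpha_1\mid\alpha_2\mid\dots\mid\alpha_n$, and the $\alpha_j$ are normalized: for $R=\mathbb{Z}$, $\alpha_j>0$; for $R=\mathbb{Z}[i]$, $\mathrm{Re}\,\alpha_j>0$ and $\mathrm{Im}\,\alpha_j\geq 0$. $A^*$ is the conjugate transpose. *)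

(* Defs.v *)
(* Both rings Z and Z[i] are modelled as subrings of algC. *)
From HB Require Import structures.
From mathcomp Require Import all_boot all_order all_algebra all_field.
Set Implicit Arguments. Unset Strict Implicit. Unset Printing Implicit Defensive.
Import Order.TTheory GRing.Theory Num.Theory.
Local Open Scope ring_scope.

Inductive Rkind := RZ | RZi.

Definition inR (r : Rkind) (x : algC) : bool :=
  match r with
  | RZ => x \is a Num.int
  | RZi => ('Re x \is a Num.int) && ('Im x \is a Num.int)
  end.

Definition dvdR (r : Rkind) (a b : algC) : Prop :=
  exists c, inR r c /\ b = a * c.

Definition mxadj (n : nat) (A : 'M[algC]_n) : 'M[algC]_n :=
  \matrix_(i, j) (A j i)^*.

Definition isGL (r : Rkind) (n : nat) (P : 'M[algC]_n) : Prop :=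
  (forall i j, inR r (P i j)) /\
  exists P' : 'M[algC]_n, (forall i j, inR r (P' i j)) /\
    P *m P' = 1%:M /\ P' *m P = 1%:M.

Definition normalized (r : Rkind) (a : algC) : Prop :=
  match r with
  | RZ => 0 < a
  | RZi => 0 < 'Re a /\ 0 <= 'Im a
  end.

Definition isSNF (r : Rkind) (n : nat) (A : 'M[algC]_n) (alpha : 'I_n -> algC) : Prop :=
  (forall j, inR r (alpha j)) /\
  (exists P Q : 'M[algC]_n, isGL r P /\ isGL r Q /\
      A = P *m diag_mx (\row_j alpha j) *m Q) /\
  (forall i j : 'I_n, (j : nat) = i.+1 -> dvdR r (alpha i) (alpha j)) /\
  (forall j, normalized r (alpha j)).

(* Main.v *)
Require Import Defs.
From HB Require Import structures.
From mathcomp Require Import all_boot all_order all_algebra all_field.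
From mathcomp Require Import zify perm.
Import Order.TTheory GRing.Theory Num.Theory.
Local Open Scope ring_scope.
Set Implicit Arguments. Unset Strict Implicit.
Lemma inR0 r : inR r 0.
Proof. by case: r => /=; rewrite ?raddf0 ?rpred0. Qed.
Lemma inR1 r : inR r 1.
Proof. case: r => /=; rewrite ?rpred1 //.
have -> : (1:algC) = 1 + 'i * 0 by rewrite mulr0 addr0.
by rewrite Re_rect ?Im_rect ?rpred0 ?rpred1.
Qed.
Lemma inRD r x y : inR r x -> inR r y -> inR r (x + y).
Proof. case: r => /=; first exact: rpredD.
by move=> /andP[? ?] /andP[? ?]; rewrite !raddfD /= !rpredD. Qed.
Lemma inRN r x : inR r x -> inR r (- x).
Proof. case: r => /=; first by move=> h; rewrite rpredN.
by move=> /andP[? ?]; rewrite !raddfN /= !rpredN; apply/andP. Qed.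
Lemma inRM r x y : inR r x -> inR r y -> inR r (x * y).
Proof. case: r => /=; first exact: rpredM.
by move=> /andP[? ?] /andP[? ?]; rewrite ReM ImM ?rpredB ?rpredD ?rpredM. Qed.
Lemma inRconj r x : inR r x -> inR r x^*.
Proof. case: r => /=; first by move=> h; rewrite conj_Creal ?Rreal_int.
by move=> /andP[? ?]; rewrite Re_conj Im_conj rpredN; apply/andP. Qed.
Lemma inR_GI r x : inR r x -> ('Re x \is a Num.int) && ('Im x \is a Num.int).
Proof. case: r => //= h.
have Rx : x \is Num.real by apply: Rreal_int.
by rewrite (Creal_ReP _ Rx) (Creal_ImP _ Rx) h rpred0. Qed.
Lemma int_aux (a b c d : int) : (a*a+b*b)*(c*c+d*d) = 1 -> 0 < a -> a = 1 /\ b = 0.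
Proof. move=> h ha.
have h1 : 1 <= a*a+b*b by nia.
have h2 : 0 <= c*c+d*d by nia.
have h3 : 1 <= c*c+d*d by nia.
have h4 : a*a+b*b = 1 by nia.
split; nia. Qed.

Lemma unitR1 r w w' : inR r w -> inR r w' -> w * w' = 1 -> 0 < 'Re w -> w = 1.
Proof.
move=> /inR_GI /andP[/intrP[a ha] /intrP[b hb]] /inR_GI /andP[/intrP[c hc] /intrP[d hd]] ww' hRe.
have n1 : `|w| ^+ 2 * `|w'| ^+ 2 = 1 by rewrite -exprMn -normrM ww' normr1 expr1n.
rewrite !normC2_Re_Im ha hb hc hd !expr2 -!intrM -!intrD -intrM in n1.
have n2 : ((a*a + b*b) * (c*c + d*d))%R = 1%R :> int by apply/eqP; rewrite -(eqr_int algC) n1.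
have ha0 : (0 < a)%R by rewrite -(ltr0z algC) -ha.
have [e1 e2] := @int_aux a b c d n2 ha0.
by rewrite [w]Crect ha hb e1 e2 mulr0 addr0.
Qed.
Lemma det_prod_gen k n (X : 'M[algC]_(k, n)) (Y : 'M[algC]_(n, k)) :
  \det (X *m Y) = \sum_(f : {ffun 'I_k -> 'I_n}) (\prod_i X i (f i)) * \det (\matrix_(i, j) Y (f i) j).
Proof.
rewrite /determinant.
under eq_bigr => s _.
  under eq_bigr => i _ do rewrite mxE.
  rewrite bigA_distr_bigA big_distrr /=.
  over.
rewrite exchange_big /=; apply: eq_bigr => f _.
rewrite big_distrr /=; apply: eq_bigr => s _.
rewrite big_split /= mulrCA; congr (_ * _); congr (_ * _).
by apply: eq_bigr => i _; rewrite mxE.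
Qed.

Lemma dvdR_refl r a : dvdR r a a.
Proof. by exists 1; split; [apply: inR1 | rewrite mulr1]. Qed.
Lemma dvdR0 r a : dvdR r a 0.
Proof. by exists 0; split; [apply: inR0 | rewrite mulr0]. Qed.
Lemma dvdR_trans r a b c : dvdR r a b -> dvdR r b c -> dvdR r a c.
Proof. move=> [x [hx ->]] [y [hy ->]]; exists (x * y); split; first exact: inRM.
by rewrite mulrA. Qed.
Lemma dvdRD r a b c : dvdR r a b -> dvdR r a c -> dvdR r a (b + c).
Proof. move=> [x [hx ->]] [y [hy ->]]; exists (x + y); split; first exact: inRD.
by rewrite mulrDr. Qed.
Lemma dvdRN r a b : dvdR r a b -> dvdR r a (- b).
Proof. move=> [x [hx ->]]; exists (- x); split; first exact: inRN.
by rewrite mulrN. Qed.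
Lemma dvdRMl r a b z : inR r z -> dvdR r a b -> dvdR r a (z * b).
Proof. move=> hz [x [hx ->]]; exists (z * x); split; first exact: inRM.
by rewrite mulrCA. Qed.
Lemma dvdRMr r a b z : inR r z -> dvdR r a b -> dvdR r a (b * z).
Proof. by move=> hz h; rewrite mulrC; apply: dvdRMl. Qed.
Lemma dvdRMM r a b c d : dvdR r a b -> dvdR r c d -> dvdR r (a * c) (b * d).
Proof. move=> [x [hx ->]] [y [hy ->]]; exists (x * y); split; first exact: inRM.
by rewrite mulrACA. Qed.
Lemma dvdR_sum r (I : finType) (P : pred I) a (F : I -> algC) :
  (forall i, P i -> dvdR r a (F i)) -> dvdR r a (\sum_(i | P i) F i).
Proof. move=> h; elim/big_ind: _ => //; [exact: dvdR0 | exact: dvdRD]. Qed.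
Lemma inR_prod r (I : finType) (P : pred I) (F : I -> algC) :
  (forall i, P i -> inR r (F i)) -> inR r (\prod_(i | P i) F i).
Proof. move=> h; elim/big_ind: _ => //; [exact: inR1 | exact: inRM]. Qed.
Lemma inR_sum r (I : finType) (P : pred I) (F : I -> algC) :
  (forall i, P i -> inR r (F i)) -> inR r (\sum_(i | P i) F i).
Proof. move=> h; elim/big_ind: _ => //; [exact: inR0 | exact: inRD]. Qed.

Definition gminor k n (M : 'M[algC]_n) (g h : 'I_k -> 'I_n) :=
  \det (\matrix_(i, j) M (g i) (h j)).
Definition DvM r k n c (M : 'M[algC]_n) := forall g h : 'I_k -> 'I_n, dvdR r c (gminor M g h).

Lemma DvM_mull r k n c (P M : 'M[algC]_n) :
  (forall i j, inR r (P i j)) -> DvM r k c M -> DvM r k c (P *m M).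
Proof.
move=> hP hM g h; rewrite /gminor.
have -> : \matrix_(i, j) (P *m M) (g i) (h j) =
   (\matrix_(i, l) P (g i) l) *m (\matrix_(l, j) M l (h j)).
  by apply/matrixP => i j; rewrite !mxE; apply: eq_bigr => l _; rewrite !mxE.
rewrite det_prod_gen; apply: dvdR_sum => f _; apply: dvdRMl.
  by apply: inR_prod => i _; rewrite mxE.
have -> : \matrix_(i, j) (\matrix_(l, j) M l (h j)) (f i) j = \matrix_(i, j) M (f i) (h j).
  by apply/matrixP => i j; rewrite !mxE.
exact: hM.
Qed.

Lemma gminor_tr k n (M : 'M[algC]_n) (g h : 'I_k -> 'I_n) : gminor M^T g h = gminor M h g.
Proof. rewrite /gminor -det_tr; congr (\det _); apply/matrixP => i j; rewrite !mxE. done. Qed.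

Lemma DvM_tr r k n c (M : 'M[algC]_n) : DvM r k c M -> DvM r k c M^T.
Proof. by move=> h g g'; rewrite gminor_tr. Qed.

Lemma DvM_mulr r k n c (M Q : 'M[algC]_n) :
  (forall i j, inR r (Q i j)) -> DvM r k c M -> DvM r k c (M *m Q).
Proof.
move=> hQ hM g h; rewrite -gminor_tr trmx_mul; apply: DvM_mull; last exact: DvM_tr.
by move=> i j; rewrite mxE.
Qed.
Lemma chain_mono r (D : nat -> algC) n :
  (forall j, (j.+1 < n)%N -> dvdR r (D j) (D j.+1)) ->
  forall i j, (i <= j)%N -> (j < n)%N -> dvdR r (D i) (D j).
Proof.
move=> hc i j hij; elim: j hij => [|j IH] hij hjn.
  have -> : i = 0%N by lia. exact: dvdR_refl.
case: (ltngtP i j.+1) hij => // [hlt|->] _; last exact: dvdR_refl.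
apply: dvdR_trans (IH _ _) (hc _ hjn); lia.
Qed.

Lemma chain_seq r (D : nat -> algC) n :
  (forall j, inR r (D j)) -> (forall j, (j.+1 < n)%N -> dvdR r (D j) (D j.+1)) ->
  forall S : seq nat, uniq S -> all (fun j => j < n)%N S ->
  dvdR r (\prod_(j <- iota 0 (size S)) D j) (\prod_(j <- S) D j).
Proof.
move=> hR; elim: n => [|n IH] hc S uS aS.
  case: S uS aS => [|x S] _ /=; first by move=> _; exact: dvdR_refl.
  by [].
case: (boolP (n \in S)) => hn.
- have pS := perm_to_rem hn.
  rewrite (perm_big _ pS) (perm_size pS) big_cons.
  have -> : size (n :: rem n S) = (size (rem n S) + 1)%N by rewrite /= addn1.
  rewrite iotaD big_cat /= big_seq1 add0n.
  have uS' : uniq (rem n S) by apply: rem_uniq.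
  have aS' : all (fun j => j < n)%N (rem n S).
    apply/allP => x hx; have hxS : x \in S by apply: mem_rem hx.
    have : x != n by apply: contraTneq hx => ->; rewrite mem_rem_uniqF.
    by move: (allP aS x hxS) => /=; lia.
  rewrite [X in dvdR _ _ X]mulrC; apply: dvdRMM; first by apply: IH => // j hj; apply: hc; lia.
  apply: (chain_mono hc) => //.
  have : (size (rem n S) <= size (iota 0 n))%N.
    apply: uniq_leq_size => // x hx; rewrite mem_iota /=; exact: (allP aS' x hx).
  by rewrite size_iota.
- apply: IH => //; first by move=> j hj; apply: hc; lia.
  apply/allP => x hx; have := allP aS x hx => /=.
  have : x != n by apply: contraNneq hn => <-.
  lia.
Qed.
Definition Dn n (d : 'I_n -> algC) (j : nat) : algC :=
  if insub j is Some o then d o else 1.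

Lemma DnE n (d : 'I_n -> algC) (o : 'I_n) : Dn d o = d o.
Proof. by rewrite /Dn valK. Qed.

Definition dg n (d : 'I_n -> algC) : 'M[algC]_n := diag_mx (\row_j d j).

Lemma prod_iota_ord n k (d : 'I_n -> algC) (hk : (k <= n)%N) :
  \prod_(j <- iota 0 k) Dn d j = \prod_(i < k) d (widen_ord hk i).
Proof.
have -> : iota 0 k = index_iota 0 k by rewrite /index_iota subn0.
by rewrite big_mkord; apply: eq_bigr => i _; rewrite -DnE.
Qed.

Lemma DvM_dg_prod r n k c (d : 'I_n -> algC) (hk : (k <= n)%N) :
  DvM r k c (dg d) -> dvdR r c (\prod_(j <- iota 0 k) Dn d j).
Proof.
move=> h; have := h (widen_ord hk) (widen_ord hk).
rewrite prod_iota_ord /gminor.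
have -> : \matrix_(i, j) dg d (widen_ord hk i) (widen_ord hk j) =
   diag_mx (\row_i d (widen_ord hk i)).
  by apply/matrixP => i j; rewrite !mxE -[widen_ord hk i == _]val_eqE /= val_eqE.
by rewrite det_diag; under eq_bigr => i _ do rewrite mxE.
Qed.

Lemma prod_inj_dvd r n k (d : 'I_n -> algC) (g : 'I_k -> 'I_n) :
  (forall j, inR r (d j)) ->
  (forall i j : 'I_n, (j : nat) = i.+1 -> dvdR r (d i) (d j)) ->
  injective g ->
  dvdR r (\prod_(j <- iota 0 k) Dn d j) (\prod_i d (g i)).
Proof.
move=> hR hc ig.
set S := [seq (val (g i)) | i <- enum 'I_k].
have -> : \prod_i d (g i) = \prod_(j <- S) Dn d j.
  by rewrite big_map big_enum /=; apply: eq_bigr => i _; rewrite DnE.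
have -> : k = size S by rewrite size_map size_enum_ord.
apply: (@chain_seq r (Dn d) n).
- by move=> j; rewrite /Dn; case: insubP => [o _ _|_]; [apply: hR | apply: inR1].
- move=> j hj; have hj' : (j < n)%N by lia.
  rewrite -[Dn d j]/(Dn d (Ordinal hj')) -[Dn d j.+1]/(Dn d (Ordinal hj)) !DnE; exact: hc.
- rewrite map_inj_uniq ?enum_uniq //; move=> x y /val_inj; exact: ig.
- apply/allP => x /mapP [i _ ->]; exact: ltn_ord.
Qed.

Lemma inR_sign r m : inR r ((-1) ^+ m).
Proof. elim: m => [|m IH]; first by rewrite expr0; apply: inR1.
by rewrite exprS; apply: inRM => //; apply: inRN; apply: inR1. Qed.

Lemma dg_DvM r n k c (d : 'I_n -> algC) :
  (forall j, inR r (d j)) ->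
  (forall i j : 'I_n, (j : nat) = i.+1 -> dvdR r (d i) (d j)) ->
  dvdR r c (\prod_(j <- iota 0 k) Dn d j) -> DvM r k c (dg d).
Proof.
move=> hR hc hd g h; rewrite /gminor.
case: (boolP (injectiveb g)) => [/injectiveP ig | /injectivePn [i1 [i2 ne e]]]; last first.
  rewrite (determinant_alternate ne); first exact: dvdR0.
  by move=> j; rewrite !mxE e.
rewrite /determinant; apply: dvdR_sum => s _; apply: dvdRMl.
  by apply: inR_sign.
case: (boolP [forall i, g i == h (s i)]) => [/forallP al | /forallPn [i0 ni0]].
  under eq_bigr => i _ do rewrite !mxE (al i) mulr1n.
  apply: dvdR_trans hd _; exact: prod_inj_dvd.
rewrite (bigD1 i0) //= !mxE (negbTE ni0) mulr0n mul0r; exact: dvdR0.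
Qed.
Definition assoc r (x y : algC) :=
  exists w w', [/\ inR r w, inR r w', w * w' = 1 & y = x * w].

Lemma assoc_dvd r x y : dvdR r x y -> dvdR r y x -> x != 0 -> assoc r x y.
Proof.
move=> [w [hw ey]] [w' [hw' ex]] nx; exists w, w'; split => //.
apply: (mulfI nx); rewrite mulr1 mulrA -ey; exact: esym.
Qed.

Lemma assoc_cancel r p q x y : assoc r (p * x) (q * y) -> assoc r p q -> p != 0 ->
  assoc r x y.
Proof.
move=> [w2 [w2' [h2 h2' e2 E2]]] [w1 [w1' [h1 h1' e1 E1]]] np.
exists (w2 * w1'), (w2' * w1); split; try exact: inRM.
  by rewrite mulrACA e2 mul1r mulrC e1.
rewrite E1 -!mulrA in E2; have := mulfI np E2 => E.
by rewrite mulrA -E mulrAC e1 mul1r.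
Qed.

Lemma prod_Dn_neq0 n (d : 'I_n -> algC) k : (forall j, d j != 0) ->
  \prod_(j <- iota 0 k) Dn d j != 0.
Proof.
move=> h; rewrite prodf_seq_neq0; apply/allP => j _ /=.
by rewrite /Dn; case: insubP => [o _ _|_]; rewrite ?h ?oner_neq0.
Qed.

Lemma equiv_assoc r n (a b : 'I_n -> algC) (X Y X' Y' : 'M[algC]_n) :
  (forall j, inR r (a j)) -> (forall j, inR r (b j)) ->
  (forall i j : 'I_n, (j : nat) = i.+1 -> dvdR r (a i) (a j)) ->
  (forall i j : 'I_n, (j : nat) = i.+1 -> dvdR r (b i) (b j)) ->
  (forall j, a j != 0) -> (forall j, b j != 0) ->
  (forall i j, inR r (X i j)) -> (forall i j, inR r (Y i j)) ->
  (forall i j, inR r (X' i j)) -> (forall i j, inR r (Y' i j)) ->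
  dg a = X *m dg b *m Y -> dg b = X' *m dg a *m Y' ->
  forall j, assoc r (a j) (b j).
Proof.
move=> aR bR ac bc an bn hX hY hX' hY' E1 E2.
have key : forall k, (k <= n)%N -> assoc r (\prod_(j <- iota 0 k) Dn a j) (\prod_(j <- iota 0 k) Dn b j).
  move=> k hk; apply: assoc_dvd; last exact: prod_Dn_neq0.
  - apply: (DvM_dg_prod hk); rewrite E2; apply: DvM_mulr => //; apply: DvM_mull => //.
    by apply: dg_DvM => //; apply: dvdR_refl.
  - apply: (DvM_dg_prod hk); rewrite E1; apply: DvM_mulr => //; apply: DvM_mull => //.
    by apply: dg_DvM => //; apply: dvdR_refl.
move=> j; have := key j.+1 (ltn_ord j).
rewrite -addn1 iotaD !big_cat /= !big_seq1 add0n !DnE => h.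
apply: assoc_cancel h (key j (ltnW (ltn_ord j))) _; exact: prod_Dn_neq0.
Qed.
Lemma mxadjE n (M : 'M[algC]_n) : mxadj M = (map_mx (@Num.conj algC) M)^T.
Proof. by apply/matrixP => i j; rewrite !mxE. Qed.

Lemma mxadjM n (M N : 'M[algC]_n) : mxadj (M *m N) = mxadj N *m mxadj M.
Proof. by rewrite !mxadjE map_mxM trmx_mul. Qed.

Lemma mxadj1 n : mxadj (1%:M : 'M[algC]_n) = 1%:M.
Proof. by apply/matrixP => i j; rewrite !mxE rmorphMn rmorph1 eq_sym. Qed.

Lemma mxadj_dg n (d : 'I_n -> algC) : mxadj (dg d) = dg (fun j => (d j)^*).
Proof. apply/matrixP => i j; rewrite !mxE rmorphMn; case: (eqVneq i j) => [->|ne]; first by [].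
by rewrite !mulr0n. Qed.

Lemma dg_mul n (d e : 'I_n -> algC) : dg d *m dg e = dg (fun j => d j * e j).
Proof. by rewrite /dg mulmx_diag; congr diag_mx; apply/matrixP => i j; rewrite !mxE. Qed.

Lemma dg1 n : dg (fun _ : 'I_n => 1) = 1%:M.
Proof. by apply/matrixP => i j; rewrite !mxE. Qed.

Lemma dg_entry n (d : 'I_n -> algC) j : dg d j j = d j.
Proof. by rewrite !mxE eqxx mulr1n. Qed.

Lemma mxR_mul r n (M N : 'M[algC]_n) : (forall i j, inR r (M i j)) -> (forall i j, inR r (N i j)) ->
  forall i j, inR r ((M *m N) i j).
Proof. by move=> hM hN i j; rewrite mxE; apply: inR_sum => l _; apply: inRM. Qed.

Lemma mxR_adj r n (M : 'M[algC]_n) : (forall i j, inR r (M i j)) -> forall i j, inR r (mxadj M i j).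
Proof. by move=> hM i j; rewrite mxE; apply: inRconj. Qed.

Definition Jm n : 'M[algC]_n := \matrix_(i, j) (rev_ord i == j)%:R.

Lemma Jm_mull n (M : 'M[algC]_n) i j : (Jm n *m M) i j = M (rev_ord i) j.
Proof.
rewrite mxE (bigD1 (rev_ord i)) //= mxE eqxx mul1r big1 ?addr0 // => l hl.
by rewrite mxE eq_sym (negbTE hl) mul0r.
Qed.

Lemma Jm_mulr n (M : 'M[algC]_n) i j : (M *m Jm n) i j = M i (rev_ord j).
Proof.
rewrite mxE (bigD1 (rev_ord j)) //= mxE rev_ordK eqxx mulr1 big1 ?addr0 // => l hl.
rewrite mxE; case: eqP => [e|_]; last by rewrite mulr0.
by move: hl; rewrite -e rev_ordK eqxx.
Qed.

Lemma JmJm n : Jm n *m Jm n = 1%:M.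
Proof. by apply/matrixP => i j; rewrite Jm_mull !mxE rev_ordK. Qed.

Lemma JmR r n i j : inR r (Jm n i j).
Proof. by rewrite mxE; case: eqP => _; [apply: inR1 | apply: inR0]. Qed.

Lemma Jm_dg n (d : 'I_n -> algC) : Jm n *m dg d *m Jm n = dg (fun j => d (rev_ord j)).
Proof.
apply/matrixP => i j; rewrite Jm_mulr Jm_mull !mxE.
by rewrite (inj_eq rev_ord_inj).
Qed.

Lemma norm_ReIm r x : normalized r x -> 0 < 'Re x /\ 0 <= 'Im x.
Proof.
case: r => /=; last by [].
move=> hx; have Rx : x \is Num.real by apply: gtr0_real.
by rewrite (Creal_ReP _ Rx) (Creal_ImP _ Rx).
Qed.

Unset Implicit Arguments.

Theorem mainTheorem7 (r : Rkind) (n lambda : nat) (A : 'M[algC]_n)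
    (alpha : 'I_n -> algC) :
  (0 < lambda)%N ->
  (forall i j, inR r (A i j)) ->
  mxadj A *m A = (lambda%:R : algC)%:M ->
  isSNF r A alpha ->
  forall j : 'I_n, (alpha j)^* * alpha (rev_ord j) = lambda%:R.
Proof.
move=> hl hA HA [alR [[P [Q [[PR [P' [P'R [PP' P'P]]]] [[QR [Q' [Q'R [QQ' Q'Q]]]] EA]]]] [hc hn]]] j.
set L : algC := lambda%:R.
have Ln : L != 0 by rewrite pnatr_eq0 -lt0n.
have an : forall j, alpha j != 0.
  by move=> k; have [h _] := norm_ReIm (hn k); apply: contraTneq h => ->; rewrite raddf0 ltxx.
change (A = P *m dg alpha *m Q) in EA.
set Dinv := dg (fun k => (alpha k)^-1).
have DDi : dg alpha *m Dinv = 1%:M.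
  by rewrite dg_mul -dg1; apply/matrixP => i k; rewrite !mxE divff.
set B0 := L%:M *m Dinv.
set Dc := mxadj (dg alpha).
have ET : mxadj Q *m Dc *m mxadj P *m P = Q' *m B0.
  have h : (mxadj Q *m Dc *m mxadj P *m P) *m (dg alpha *m (Q *m Q') *m Dinv) = L%:M *m Q' *m Dinv.
    by move: HA; rewrite EA !mxadjM => <-; rewrite !mulmxA.
  rewrite QQ' mulmx1 DDi mulmx1 in h.
  by rewrite h -scalar_mxC -mulmxA.
have E2 : Q *m mxadj Q *m Dc *m mxadj P *m P = B0.
  by have := congr1 (mulmx Q) ET; rewrite !mulmxA QQ' mul1mx.
have E1 : Dc = mxadj Q' *m Q' *m B0 *m P' *m mxadj P'.
  have h1 : mxadj Q' *m mxadj Q = 1%:M by rewrite -mxadjM QQ' mxadj1.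
  have h2 : mxadj P *m mxadj P' = 1%:M by rewrite -mxadjM P'P mxadj1.
  have := congr1 (fun M => mxadj Q' *m M *m P' *m mxadj P') ET => /=.
  rewrite !mulmxA h1 mul1mx -(mulmxA _ P P') PP' mulmx1 -(mulmxA Dc) h2 mulmx1 => ->.
  by [].
set b := fun k => L / alpha (rev_ord k).
have B0E : B0 = Jm n *m dg b *m Jm n.
  rewrite Jm_dg /B0 /Dinv; apply/matrixP => i k.
  rewrite mul_scalar_mx !mxE /b rev_ordK; case: eqP => _; by rewrite ?mulr1n ?mulr0n ?mulr0.
have bE : dg b = Jm n *m B0 *m Jm n.
  by rewrite B0E !mulmxA JmJm mul1mx -mulmxA JmJm mulmx1.
set a := fun k => (alpha k)^*.
have aE : Dc = dg a by rewrite /Dc mxadj_dg.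
have E1' : dg a = (mxadj Q' *m Q' *m Jm n) *m dg b *m (Jm n *m P' *m mxadj P').
  by rewrite -aE E1 B0E !mulmxA.
have E2' : dg b = (Jm n *m Q *m mxadj Q) *m dg a *m (mxadj P *m P *m Jm n).
  by rewrite bE -E2 -aE !mulmxA.
have aR : forall k, inR r (a k) by move=> k; apply: inRconj.
have an' : forall k, a k != 0 by move=> k; rewrite /a conjC_eq0.
have ac : forall i k : 'I_n, (k : nat) = i.+1 -> dvdR r (a i) (a k).
  move=> i k e; have [c [cR ec]] := hc i k e; exists c^*; split; first exact: inRconj.
  by rewrite /a ec rmorphM.
have bn : forall k, b k != 0 by move=> k; rewrite /b mulf_neq0 // invr_eq0.
have dgR : forall (d : 'I_n -> algC), (forall k, inR r (d k)) -> forall i k, inR r (dg d i k).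
  move=> d hd i k; rewrite !mxE; case: eqP => _; rewrite ?mulr1n ?mulr0n //; exact: inR0.
have bR : forall k, inR r (b k).
  move=> k; rewrite -(dg_entry b k) E2'.
  exact: (mxR_mul (mxR_mul (mxR_mul (mxR_mul (@JmR r n) QR) (mxR_adj QR)) (dgR _ aR)) (mxR_mul (mxR_mul (mxR_adj PR) PR) (@JmR r n))).
have bc : forall i k : 'I_n, (k : nat) = i.+1 -> dvdR r (b i) (b k).
  move=> i k e.
  have e' : (rev_ord i : nat) = (rev_ord k).+1.
    rewrite /= e; have := ltn_ord k; rewrite e; lia.
  have [c [cR ec]] := hc _ _ e'; exists c; split => //.
  have cn : c != 0 by apply: contraTneq (an (rev_ord i)) => hc0; rewrite ec hc0 mulr0 eqxx.
  by rewrite /b ec invfM mulrA -mulrA mulVf ?mulr1.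
have [w [w' [wR w'R ww' ebw]]] := equiv_assoc aR bR ac bc an' bn
  (mxR_mul (mxR_mul (mxR_adj Q'R) Q'R) (@JmR r n))
  (mxR_mul (mxR_mul (@JmR r n) P'R) (mxR_adj P'R))
  (mxR_mul (mxR_mul (@JmR r n) QR) (mxR_adj QR))
  (mxR_mul (mxR_mul (mxR_adj PR) PR) (@JmR r n)) E1' E2' j.
set y := a j * alpha (rev_ord j).
have yn : y != 0 by rewrite mulf_neq0.
have ew : w = L / y.
  apply: (mulfI (an' j)); rewrite -ebw /b /y invfM. by rewrite mulrCA (mulrA (a j)) mulfV // mul1r.
have [Rj Ij] := norm_ReIm (hn j).
have [Rr Ir] := norm_ReIm (hn (rev_ord j)).
have Ry : 0 < 'Re y.
  rewrite /y /a ReM Re_conj Im_conj mulNr opprK.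
  apply: (lt_le_trans (mulr_gt0 Rj Rr)); rewrite lerDl; exact: mulr_ge0 Ij Ir.
have RL : L \is Num.real by rewrite realn.
have Rw : 0 < 'Re w.
  rewrite ew Re_div (Creal_ReP _ RL) (Creal_ImP _ RL) mul0r addr0.
  apply: divr_gt0; first by apply: mulr_gt0 => //; rewrite ltr0n.
  by rewrite exprn_gt0 // normr_gt0.
have w1 := unitR1 wR w'R ww' Rw.
rewrite w1 mulr1 /b in ebw.
by rewrite /y -ebw divfK.
Qed.
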